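(* Let $\|\cdot\|$ be a norm on $\mathbb{M}_n$. Then the class of all $M$-norms $\||\cdot\||$ on $\mathbb{M}_n$ with $\||A\||\le\|A\|$ for all $A\in\mathbb{M}_n$ has a maximum element.
   Context: $\mathbb{M}_n$ is the algebra of complex $n\times n$ matrices with identity $I$. A norm $\||\cdot\||$ on $\mathbb{M}_n$ is an $M$-norm if $\left\||\sum_{i=1}^k C_i^*X_iC_i\right\||\le \max_{1\le i\le k}\||X_i\||$ for all $k$, all $X_i\in\mathbb{M}_n$ and all $C_i\in\mathbb{M}_n$ with $\sum_{i=1}^k C_i^*C_i=I$. Inequalities between norms are pointwise. *)

(* Defs.v *)
From HB Require Import structures.
From mathcomp Require Import all_boot all_order all_algebra.
From mathcomp Require Import complex.
From mathcomp Require Import reals.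
Set Implicit Arguments. Unset Strict Implicit. Unset Printing Implicit Defensive.
Import Order.TTheory GRing.Theory Num.Theory.
Local Open Scope ring_scope.

Definition adjmx (R : realType) (n : nat) (A : 'M[R[i]]_n) : 'M[R[i]]_n :=
  (map_mx (@conjc R) A)^T.

Definition is_norm (R : realType) (n : nat) (N : 'M[R[i]]_n -> R) : Prop :=
  [/\ (forall A, 0 <= N A),
      (forall A, N A = 0 -> A = 0),
      (forall (c : R[i]) A, N (c *: A) = Normc.normc c * N A)
    & (forall A B, N (A + B) <= N A + N B)].

Definition is_Mnorm (R : realType) (n : nat) (N : 'M[R[i]]_n -> R) : Prop :=
  is_norm N /\
  forall (k : nat) (C X : 'I_k -> 'M[R[i]]_n),
    \sum_(i < k) (adjmx (C i) *m C i) = 1%:M ->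
    N (\sum_(i < k) (adjmx (C i) *m X i *m C i)) <= \big[Num.max/0]_(i < k) N (X i).

(* Main.v *)
Require Import Defs.
From HB Require Import structures.
From mathcomp Require Import all_boot all_order all_algebra.
From mathcomp Require Import complex.
From mathcomp Require Import reals.
From mathcomp Require Import boolp classical_sets topology normedtype derive.
From mathcomp Require Import ring.
Import Order.TTheory GRing.Theory Num.Theory.
Import numFieldNormedType.Exports.
Local Open Scope ring_scope.
Local Open Scope complex_scope.
Set Implicit Arguments. Unset Strict Implicit. Unset Printing Implicit Defensive.
Section Aux.
Variable R : realType.
Local Notation C := R[i].
Local Notation nc := (@Normc.normc R).

Lemma nc_ge0 (z : C) : 0 <= nc z.
Proof. by case: z => a b; rewrite /Normc.normc sqrtr_ge0. Qed.
Lemma nc_real (r : R) : nc (r%:C) = `|r|.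
Proof. rewrite /Normc.normc /=. have -> : (0:R) ^+ 2 = 0 by rewrite expr2 mulr0. by rewrite addr0 sqrtr_sqr. Qed.

Lemma nc_le (a b : R) : nc (Complex a b) <= `|a| + `|b|.
Proof.
rewrite /Normc.normc.
have h : 0 <= `|a| + `|b| by rewrite addr_ge0.
rewrite -(ger0_norm h) -sqrtr_sqr ler_sqrt; last by rewrite sqr_ge0.
rewrite sqrrD -[a ^+ 2]real_normK ?num_real // -[b ^+ 2]real_normK ?num_real //.
rewrite -addrA lerD2l lerDr.
by rewrite mulrn_wge0 // mulr_ge0.
Qed.

Lemma bigmax_ge0 (I : finType) (F : I -> R) : 0 <= \big[Num.max/0]_(i : I) F i.
Proof. by apply/bigmax_geP; left. Qed.

Lemma coord_le k (w : 'rV[R]_k) j : `|w ord0 j| <= `|w|.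
Proof.
rewrite [leRHS]/Num.Def.normr /= mx_normrE; apply/bigmax_geP; right; by exists (ord0, j).
Qed.

Variables (n : nat) (nrm : 'M[C]_n -> R).
Hypothesis hn : is_norm nrm.

Lemma nrm0 : nrm 0 = 0.
Proof. case: hn => _ _ hZ _. by rewrite -(scale0r 0) hZ Normc.normc0 mul0r. Qed.

Lemma nrm_ge0 A : 0 <= nrm A. Proof. by case: hn. Qed.

Lemma nrm_sum (I : Type) (r : seq I) (P : pred I) (F : I -> 'M[C]_n) :
  nrm (\sum_(i <- r | P i) F i) <= \sum_(i <- r | P i) nrm (F i).
Proof.
case: hn => _ _ _ hD.
elim/big_ind2: _ => [|a b x y h1 h2|i _]; first by rewrite nrm0.
  by apply: le_trans (hD _ _) _; exact: lerD.
by [].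
Qed.

Definition psi (A : 'M[C]_n) : 'rV[R]_(n * (n + n)) :=
  mxvec (row_mx (map_mx (@complex.Re R) A) (map_mx (@complex.Im R) A)).
Definition phi (v : 'rV[R]_(n * (n + n))) : 'M[C]_n :=
  \matrix_(i, j) Complex (vec_mx v i (lshift n j)) (vec_mx v i (rshift n j)).

Lemma phi_psi A : phi (psi A) = A.
Proof.
apply/matrixP => i j; rewrite mxE mxvecK row_mxEl row_mxEr !mxE.
by case: (A i j).
Qed.

Lemma psi_phi v : psi (phi v) = v.
Proof.
rewrite /psi -[RHS]vec_mxK; congr mxvec.
rewrite -[vec_mx v]hsubmxK; congr row_mx; apply/matrixP => i j; by rewrite !mxE.
Qed.

Lemma phi0 : phi 0 = 0.
Proof. by apply/matrixP => i j; rewrite !mxE. Qed.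

Lemma phi_eq0 v : phi v = 0 -> v = 0.
Proof. by move=> h; rewrite -[v]psi_phi h -phi0 psi_phi. Qed.

Lemma phiB u v : phi (u - v) = phi u - phi v.
Proof. by apply/matrixP => i j; rewrite !mxE. Qed.

Lemma phiZ (a : R) v : phi (a *: v) = a%:C *: phi v.
Proof.
apply/matrixP => i j; rewrite !mxE /=.
by simpc.
Qed.

Lemma nrm_phiZ (a : R) v : nrm (phi (a *: v)) = `|a| * nrm (phi v).
Proof. by case: hn => _ _ hZ _; rewrite phiZ hZ nc_real. Qed.

Lemma phi_entry v i j : nc (phi v i j) <= 2 * `|v|.
Proof.
rewrite mxE (le_trans (nc_le _ _)) // mulr2n mulrDl mul1r.
by apply: lerD; rewrite mxE coord_le.
Qed.

Definition Lc := 2 * \sum_i \sum_j nrm (delta_mx i j).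

Lemma Lc_ge0 : 0 <= Lc.
Proof. by rewrite mulr_ge0 // sumr_ge0 // => i _; rewrite sumr_ge0 // => j _; exact: nrm_ge0. Qed.

Lemma nrm_phi_le v : nrm (phi v) <= Lc * `|v|.
Proof.
case: (hn) => _ _ hZ _.
rewrite {1}[phi v]matrix_sum_delta (le_trans (nrm_sum _ _ _)) //.
have -> : Lc * `|v| = \sum_i \sum_j (2 * `|v|) * nrm (delta_mx i j).
  rewrite /Lc mulrAC mulr_sumr; apply: eq_bigr => i _; by rewrite mulr_sumr.
apply: ler_sum => i _.
rewrite (le_trans (nrm_sum _ _ _)) // ler_sum // => j _.
rewrite hZ ler_wpM2r //; first exact: nrm_ge0.
exact: phi_entry.
Qed.


Definition Fn (v : 'rV[R]_(n * (n + n))) := nrm (phi v).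

Lemma Fn_lip u v : `|Fn u - Fn v| <= Lc * `|u - v|.
Proof.
case: (hn) => _ _ _ hD.
have h1 : forall a b, Fn a - Fn b <= Lc * `|a - b|.
  move=> a b; rewrite lerBlDl /Fn; apply: le_trans (_ : nrm (phi b) + nrm (phi (a - b)) <= _).
    by rewrite -[phi a](subrK (phi b)) addrC -phiB hD.
  by rewrite lerD2l nrm_phi_le.
rewrite ler_norml h1 andbT lerNl opprB (le_trans (h1 v u)) //.
by rewrite distrC.
Qed.

Lemma Fn_cont : continuous Fn.
Proof.
move=> x s /= /(nbhs_ballP (Fn x)) [e e0 es].
apply/nbhs_ballP; exists (e / (Lc + 1)) => /=.
  by rewrite divr_gt0 // ltr_wpDl // Lc_ge0.
move=> y; rewrite -ball_normE /= => hxy.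
apply: es; rewrite -ball_normE /=.
apply: le_lt_trans (Fn_lip x y) _.
have hL : 0 < Lc + 1 by rewrite ltr_wpDl // Lc_ge0.
rewrite ltr_pdivlMr // in hxy.
apply: le_lt_trans hxy.
rewrite mulrC ler_wpM2l // ?normr_ge0 // lerDl //.
Qed.

Lemma step1 : exists c : R, forall (A : 'M[C]_n) i j, nc (A i j) <= c * nrm A.
Proof.
pose S : set 'rV[R]_(n * (n + n)) := fun v => `|v| = 1.
have Sc : compact S.
  apply: bounded_closed_compact.
    exists 1; split => // M M1 v /= Sv; rewrite Sv ltW //.
  apply: (@preimage_closed _ _ (fun v : 'rV[R]_(n * (n + n)) => `|v|) (fun x : R => x = 1)); last exact: closed_eq.
  by move=> x _; exact: norm_continuous.
have key : forall A, psi A = 0 \/ psi A != 0 by move=> A; case: eqP => h; [left|right].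
have [[v0 Sv0]|S0] := pselect (S !=set0)%classic; last first.
  exists 0 => A i j.
  have hA : A = 0.
    case: (eqVneq (psi A) 0) => [h|h]; first by rewrite -(phi_psi A) h phi0.
    exfalso; apply: S0; exists (`|psi A|^-1 *: psi A); rewrite /S /= normrZ normfV normr_id.
    by rewrite mulVf // normr_eq0.
  by rewrite hA mxE Normc.normc0 mul0r.
have [c cS cmin] := compact_EVT_min (ex_intro _ v0 Sv0) Sc (@continuous_subspaceT _ _ S Fn Fn_cont).
have m0 : 0 < Fn c.
  rewrite lt_def nrm_ge0 andbT; apply/eqP => h.
  case: hn => _ hE _ _.
  have := phi_eq0 (hE _ h) => c0.
  move: cS; rewrite inE /S /= c0 normr0 => /eqP; by rewrite eq_sym oner_eq0.
exists (2 / Fn c) => A i j.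
case: (eqVneq (psi A) 0) => [h|h].
  rewrite -(phi_psi A) h phi0 mxE Normc.normc0; apply: mulr_ge0; [apply: divr_ge0 => //; exact: ltW | exact: nrm_ge0].
set t := `|psi A|.
have t0 : 0 < t by rewrite normr_gt0.
have : Fn c <= Fn (t^-1 *: psi A).
  apply: cmin; rewrite inE /S /= normrZ normfV normr_id mulVf //; exact: lt0r_neq0.
rewrite /Fn nrm_phiZ phi_psi ger0_norm; last by rewrite invr_ge0 ltW.
move=> hc.
move: hc; rewrite mulrC ler_pdivlMr // => hc.
rewrite -{1}(phi_psi A); apply: le_trans (phi_entry _ _ _) _.
rewrite -/t -mulrA ler_pM2l // mulrC ler_pdivlMr //.
by rewrite mulrC.
Qed.
End Aux.

Section NR.
Variable R : realType.
Local Notation C := R[i].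
Local Notation nc := (@Normc.normc R).
Variable n : nat.

Definition adjv (x : 'cV[C]_n) : 'rV[C]_n := (map_mx (@conjc R) x)^T.
Definition qf (X : 'M[C]_n) (x : 'cV[C]_n) : C := (adjv x *m X *m x) 0 0.
Definition bf (X : 'M[C]_n) (x y : 'cV[C]_n) : C := (adjv x *m X *m y) 0 0.
Definition nr (x : 'cV[C]_n) : R := \sum_k nc (x k 0) ^+ 2.

Lemma nc_conj (z : C) : nc (z^*) = nc z.
Proof. by case: z => a b; rewrite /Normc.normc /= sqrrN. Qed.

Lemma conj_mul_nc (z : C) : z^* * z = (nc z ^+ 2)%:C.
Proof.
case: z => a b; rewrite /Normc.normc /= sqr_sqrtr; last by rewrite addr_ge0 // sqr_ge0.
apply/eqP; rewrite eq_complex /=; apply/andP; split; apply/eqP.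
  by rewrite mulNr opprK !expr2.
by rewrite mulNr mulrC subrr.
Qed.

Lemma nr_ge0 x : 0 <= nr x.
Proof. by rewrite sumr_ge0 // => k _; rewrite sqr_ge0. Qed.

Lemma nv_nr (x : 'cV[C]_n) : (adjv x *m x) 0 0 = (nr x)%:C.
Proof.
rewrite mxE /nr raddf_sum; apply: eq_bigr => k _.
by rewrite !mxE conj_mul_nc.
Qed.

Lemma nc_sum (I : Type) (r : seq I) (P : pred I) (F : I -> C) :
  nc (\sum_(i <- r | P i) F i) <= \sum_(i <- r | P i) nc (F i).
Proof.
elim/big_ind2: _ => [|a b x y h1 h2|i _]; first by rewrite Normc.normc0.
  by apply: le_trans (le_normcD _ _) _; exact: lerD.
by [].
Qed.

Lemma nc_prod_le (x : 'cV[C]_n) i j : nc (x i 0) * nc (x j 0) <= nr x.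
Proof.
have hk : forall k, nc (x k 0) ^+ 2 <= nr x.
  by move=> k; rewrite /nr (bigD1 k) //= lerDl sumr_ge0 // => l _; rewrite sqr_ge0.
case: (leP (nc (x i 0)) (nc (x j 0))) => h.
  by apply: le_trans (hk j); rewrite expr2 ler_wpM2r // nc_ge0.
by apply: le_trans (hk i); rewrite expr2 ler_wpM2l ?nc_ge0 // ltW.
Qed.

Definition Wb (X : 'M[C]_n) : R := \sum_j \sum_i nc (X i j).

Lemma Wb_ge0 X : 0 <= Wb X.
Proof. by rewrite sumr_ge0 // => j _; rewrite sumr_ge0 // => i _; exact: nc_ge0. Qed.

Lemma qf_bound X x : nc (qf X x) <= Wb X * nr x.
Proof.
rewrite /qf mxE (le_trans (nc_sum _ _ _)) // /Wb mulr_suml ler_sum // => j _.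
rewrite mxE Normc.normcM mulr_suml.
apply: le_trans (_ : (\sum_i nc (adjv x 0 i * X i j)) * nc (x j 0) <= _).
  by rewrite ler_wpM2r ?nc_ge0 // nc_sum.
rewrite mulr_suml ler_sum // => i _.
rewrite Normc.normcM !mxE nc_conj mulrAC [X in _ <= X]mulrC.
rewrite [X in X * _]mulrC -mulrA mulrA ler_wpM2r ?nc_ge0 // mulrC; exact: nc_prod_le.
Qed.

Definition wset (X : 'M[C]_n) : set R := fun r => exists x, r = nc (qf X x) / nr x.
Definition w (X : 'M[C]_n) : R := sup (wset X).

Lemma wset_ub X B : 0 <= B -> (forall x, nc (qf X x) <= B * nr x) ->
  forall r, wset X r -> r <= B.
Proof.
move=> B0 hB r [x ->].
case: (eqVneq (nr x) 0) => [h|h]; first by rewrite h invr0 mulr0.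
have hp : 0 < nr x by rewrite lt_def h nr_ge0.
by rewrite ler_pdivrMr.
Qed.

Lemma wset0 X : wset X 0.
Proof.
exists 0; have -> : qf X 0 = 0 by rewrite /qf mulmx0 mxE.
by rewrite Normc.normc0 mul0r.
Qed.

Lemma w_has_sup X : has_sup (wset X).
Proof.
split; first by exists 0; exact: wset0.
exists (Wb X) => r; apply: wset_ub; [exact: Wb_ge0|exact: qf_bound].
Qed.

Lemma w_ge0 X : 0 <= w X.
Proof. exact: (sup_upper_bound (w_has_sup X) (wset0 X)). Qed.

Lemma w_le_of X B : 0 <= B -> (forall x, nc (qf X x) <= B * nr x) -> w X <= B.
Proof.
move=> B0 hB; apply: ge_sup; first by exists 0; exact: wset0.
by move=> r; apply: wset_ub.
Qed.

Lemma w_le_Wb X : w X <= Wb X.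
Proof. apply: w_le_of; [exact: Wb_ge0|exact: qf_bound]. Qed.

Lemma w_ub X x : nc (qf X x) <= w X * nr x.
Proof.
case: (eqVneq (nr x) 0) => [h|h].
  by have := qf_bound X x; rewrite h !mulr0.
have hp : 0 < nr x by rewrite lt_def h nr_ge0.
rewrite -ler_pdivrMr //; apply: (sup_upper_bound (w_has_sup X)); by exists x.
Qed.

Lemma qfZ X (c : C) x : qf (c *: X) x = c * qf X x.
Proof. by rewrite /qf -scalemxAr -scalemxAl mxE. Qed.

Lemma qfD X Y x : qf (X + Y) x = qf X x + qf Y x.
Proof. by rewrite /qf mulmxDr mulmxDl mxE. Qed.

Lemma wZ (c : C) X : w (c *: X) = nc c * w X.
Proof.
apply/le_anti/andP; split.
  apply: w_le_of; first by rewrite mulr_ge0 ?nc_ge0 ?w_ge0.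
  move=> x; rewrite qfZ Normc.normcM -mulrA ler_wpM2l ?nc_ge0 //; exact: w_ub.
case: (eqVneq c 0) => [->|c0]; first by rewrite Normc.normc0 mul0r w_ge0.
have ncp : 0 < nc c by rewrite lt_def nc_ge0 andbT; apply/eqP => /Normc.eq0_normc/eqP; rewrite (negbTE c0).
have h : w X <= (nc c)^-1 * w (c *: X).
  apply: w_le_of; first by rewrite mulr_ge0 ?invr_ge0 ?w_ge0 // ltW.
  move=> x; rewrite -{1}(scalerK c0 X) qfZ Normc.normcM Normc.normcV -mulrA.
  apply: ler_wpM2l; [by rewrite invr_ge0 ltW | exact: w_ub].
apply: le_trans (_ : nc c * ((nc c)^-1 * w (c *: X)) <= _).
  apply: ler_wpM2l; [exact: ltW | exact: h].
by rewrite mulrA mulfV ?mul1r // lt0r_neq0.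
Qed.

Lemma wD X Y : w (X + Y) <= w X + w Y.
Proof.
apply: w_le_of; first by rewrite addr_ge0 ?w_ge0.
move=> x; rewrite qfD mulrDl; apply: le_trans (le_normcD _ _) _.
by rewrite lerD ?w_ub.
Qed.

Lemma adjvD x y : adjv (x + y) = adjv x + adjv y.
Proof. by apply/matrixP => a b; rewrite !mxE rmorphD. Qed.

Lemma adjvZ (a : C) x : adjv (a *: x) = a^* *: adjv x.
Proof. by apply/matrixP => p q; rewrite !mxE rmorphM. Qed.

Lemma adjvM (A : 'M[C]_n) x : adjv (A *m x) = adjv x *m adjmx A.
Proof. by rewrite /adjv /adjmx map_mxM trmx_mul. Qed.

Lemma qfD2 X x y : qf X (x + y) = qf X x + qf X y + bf X x y + bf X y x.
Proof.
rewrite /qf /bf adjvD mulmxDl mulmxDr !mulmxDl !mxE; ring.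
Qed.

Lemma bfZr X x y (a : C) : bf X x (a *: y) = a * bf X x y.
Proof. by rewrite /bf -scalemxAr mxE. Qed.

Lemma bfZl X x y (a : C) : bf X (a *: y) x = a^* * bf X y x.
Proof. by rewrite /bf adjvZ -scalemxAl -scalemxAl mxE. Qed.

Lemma bf_e X i j : bf X (delta_mx i 0) (delta_mx j 0) = X i j.
Proof.
rewrite /bf /adjv (_ : map_mx _ _ = delta_mx i 0); last first.
  by apply/matrixP => a b; rewrite !mxE conjc_nat.
by rewrite trmx_delta -rowE -colE !mxE.
Qed.

Lemma w_eq0 X : w X = 0 -> X = 0.
Proof.
move=> h.
have q0 : forall x, qf X x = 0.
  move=> x; apply: Normc.eq0_normc; apply/le_anti; rewrite nc_ge0 andbT.
  by have := w_ub X x; rewrite h mul0r.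
apply/matrixP => i j; rewrite mxE.
have h1 := q0 (delta_mx i 0 + delta_mx j 0).
rewrite qfD2 !q0 !bf_e !add0r in h1.
have h2 := q0 (delta_mx i 0 + 'i *: delta_mx j 0).
rewrite qfD2 !q0 bfZr bfZl !bf_e !add0r in h2.
move/eqP: h1; rewrite addr_eq0 => /eqP h1.
move: h2; rewrite [X in _ + X * _ = 0](_ : _ = - 'i); last first.
  by apply/eqP; rewrite eq_complex /= oppr0 !eqxx.
rewrite h1 mulrN mulNr -opprD -mulr2n => /eqP.
rewrite oppr_eq0 mulrn_eq0 /= mulf_eq0 => /orP [|/eqP ->]; last by rewrite oppr0.
by rewrite eq_complex /= oner_eq0 andbF.
Qed.

Lemma w_norm : is_norm w.
Proof. split; [exact: w_ge0|exact: w_eq0|exact: wZ|exact: wD]. Qed.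

Lemma w_M k (Cs Xs : 'I_k -> 'M[C]_n) :
  \sum_(i < k) (adjmx (Cs i) *m Cs i) = 1%:M ->
  w (\sum_(i < k) (adjmx (Cs i) *m Xs i *m Cs i)) <= \big[Num.max/0]_(i < k) w (Xs i).
Proof.
move=> hC; apply: w_le_of; first exact: bigmax_ge0.
move=> x.
have e1 : qf (\sum_(i < k) (adjmx (Cs i) *m Xs i *m Cs i)) x =
    \sum_(i < k) qf (Xs i) (Cs i *m x).
  rewrite /qf mulmx_sumr mulmx_suml summxE; apply: eq_bigr => i _.
  by rewrite adjvM !mulmxA.
have e2 : \sum_(i < k) nr (Cs i *m x) = nr x.
  apply: (@complexI R); rewrite raddf_sum -nv_nr -(mulmx1 (adjv x)) -hC.
  rewrite mulmx_sumr mulmx_suml summxE; apply: eq_bigr => i _.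
  by rewrite !mulmxA -(mulmxA _ (Cs i)) -adjvM nv_nr.
rewrite e1 -e2 mulr_sumr; apply: le_trans (nc_sum _ _ _) _.
apply: ler_sum => i _; apply: le_trans (w_ub _ _) _.
rewrite ler_wpM2r ?nr_ge0 //; apply/bigmax_geP; right; by exists i.
Qed.

End NR.

Section Final.
Variable R : realType.
Local Notation C := R[i].
Local Notation nc := (@Normc.normc R).

Lemma bigmax_scale k d (F : 'I_k -> R) : 0 <= d ->
  \big[Num.max/0]_(i < k) (d * F i) = d * \big[Num.max/0]_(i < k) F i.
Proof.
move=> d0; elim/big_rec2: _ => [|i x y _ ->]; first by rewrite mulr0.
by rewrite maxr_pMr.
Qed.

Lemma bigmax_mono k (F G : 'I_k -> R) : (forall i, F i <= G i) ->
  \big[Num.max/0]_(i < k) F i <= \big[Num.max/0]_(i < k) G i.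
Proof.
move=> h; apply/bigmax_leP; split; first exact: bigmax_ge0.
move=> i _; apply: le_trans (h i) _; apply/bigmax_geP; right; by exists i.
Qed.

Lemma Mscale n (N : 'M[C]_n -> R) d : is_Mnorm N -> 0 < d ->
  is_Mnorm (fun A => d * N A).
Proof.
move=> [[h0 hE hZ hD] hM] dp; split; first split.
- by move=> A; rewrite mulr_ge0 // ltW.
- move=> A /eqP; rewrite mulf_eq0 (negbTE (lt0r_neq0 dp)) /= => /eqP; exact: hE.
- by move=> c A; rewrite hZ mulrCA.
- by move=> A B /=; rewrite -mulrDr; apply: ler_wpM2l; [exact: ltW|exact: hD].
- move=> k Cs Xs hC /=; rewrite bigmax_scale; last exact: ltW.
  apply: ler_wpM2l; [exact: ltW|exact: hM].
Qed.
End Final.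

Unset Implicit Arguments.
Theorem corollary3p2 (R : realType) (n : nat) (nrm : 'M[R[i]]_n -> R) :
  is_norm nrm ->
  exists N0 : 'M[R[i]]_n -> R,
    [/\ is_Mnorm N0,
        (forall A, N0 A <= nrm A)
      & (forall N : 'M[R[i]]_n -> R,
           is_Mnorm N -> (forall A, N A <= nrm A) -> forall A, N A <= N0 A)].
Proof.
move=> hn.
have [c hc] := step1 hn.
pose K : R := \sum_(j < n) \sum_(i < n) `|c|.
have K0 : 0 <= K by rewrite sumr_ge0 // => j _; rewrite sumr_ge0.
pose d := (1 + K)^-1.
have K1 : 0 < 1 + K by rewrite ltr_pwDl.
have dp : 0 < d by rewrite invr_gt0.
pose N1 := fun A : 'M[R[i]]_n => d * w A.
have N1M : is_Mnorm N1 by apply: Mscale dp; split; [exact: w_norm | exact: w_M].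
have N1le : forall A, N1 A <= nrm A.
  move=> A; rewrite /N1 /d ler_pdivrMl //.
  apply: le_trans (w_le_Wb A) _.
  apply: le_trans (_ : K * nrm A <= _); last by rewrite mulrDl mul1r lerDr nrm_ge0.
  rewrite /Wb /K mulr_suml ler_sum // => j _; rewrite mulr_suml ler_sum // => i _.
  apply: le_trans (hc A i j) _; apply: ler_wpM2r; [exact: nrm_ge0|exact: ler_norm].
pose P := fun N : 'M[R[i]]_n -> R => is_Mnorm N /\ forall A, N A <= nrm A.
pose E := fun A : 'M[R[i]]_n => (fun r : R => exists N, P N /\ r = N A) : set R.
pose N0 := fun A => sup (E A).
have EN1 : forall A, E A (N1 A) by move=> A; exists N1.
have Eub : forall A r, E A r -> r <= nrm A by move=> A r [N [[_ hN] ->]].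
have Ehs : forall A, has_sup (E A).
  by move=> A; split; [exists (N1 A) | exists (nrm A) => r; exact: Eub].
have N0ge : forall N A, P N -> N A <= N0 A.
  by move=> N A hN; apply: (sup_upper_bound (Ehs A)); exists N.
have N0le : forall A B, (forall N, P N -> N A <= B) -> N0 A <= B.
  move=> A B h; apply: ge_sup; first by exists (N1 A).
  by move=> r [N [hN ->]]; exact: h.
have N1ge0 : forall A, 0 <= N1 A by move=> A; case: (N1M) => [[]].
have N0ge0 : forall A, 0 <= N0 A by move=> A; apply: le_trans (N1ge0 A) (N0ge _ _ _).
exists N0; split.
- split; first split.
  + exact: N0ge0.
  + move=> A h; case: (N1M) => [[_ hE _ _] _]; apply: hE.
    have := N0ge N1 A (conj N1M N1le); rewrite h => h1.
    by apply/le_anti; rewrite h1 N1ge0.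
  + move=> a A; apply/le_anti/andP; split.
      apply: N0le => N hN; case: (hN) => [[[_ _ hZ _] _] _]; rewrite hZ.
      apply: ler_wpM2l; [exact: nc_ge0 | exact: N0ge].
    case: (eqVneq a 0) => [->|a0]; first by rewrite Normc.normc0 mul0r N0ge0.
    have ncp : 0 < Normc.normc a.
      rewrite lt_def nc_ge0 andbT; apply/eqP => /Normc.eq0_normc/eqP; by rewrite (negbTE a0).
    rewrite -ler_pdivlMl //.
    apply: N0le => N hN; case: (hN) => [[[_ _ hZ _] _] _].
    rewrite -{1}(scalerK a0 A) hZ Normc.normcV; apply: ler_wpM2l; first by rewrite invr_ge0 ltW.
    exact: N0ge.
  + move=> A B; apply: N0le => N hN; case: (hN) => [[[_ _ _ hD] _] _].
    by apply: le_trans (hD A B) _; apply: lerD; apply: N0ge.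
  + move=> k Cs Xs hC; apply: N0le => N hN; case: (hN) => [[_ hM] _].
    apply: le_trans (hM k Cs Xs hC) _; apply: bigmax_mono => i; exact: N0ge.
- by move=> A; apply: N0le => N [_ h].
- by move=> N hN hle A; apply: N0ge.
Qed.
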